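(* Let $\|\cdot\|_1,\|\cdot\|_2$ be two ri norms whose fundamental functions $\phi_1,\phi_2$ are concave maps $[0,1]\to[0,1]$ with $\phi_i(0)=0$, $\phi_i(1)=1$, continuous at $0$. If the right derivatives $\phi_1'(0)$ and $\phi_2'(0)$ are finite, then the two norms are equivalent. In particular, every such norm is equivalent to the $\mathcal{L}^1$ norm $\|X\|_{\mathcal{L}^1}=\int_0^1|X|\,d\mu$.
   Context: $\Omega=[0,1]$ with Lebesgue measure $\mu$. An ri norm is $X\mapsto R(|X|)$, defined on $\{X: R(|X|)<\infty\}$, for a rearrangement invariant Banach function norm $R$ on nonnegative measurable functions, i.e. $R:\mathcal{M}^+\to[0,\infty]$ with $R(X)=0\iff X=0$, positive homogeneity, subadditivity, monotonicity, the Fatou property, $R(\chi_E)<\infty$ and $\int_EX\,d\mu\le c_ER(X)$ for constants $c_E$, normalisation $R(\chi_\Omega)=1$, and $R(X)=R(Y)$ for equimeasurable $X,Y$. Its fundamental function is $t\mapsto R(\chi_E)$ with $\mu(E)=t$. Two norms are equivalent if they define the same space and are bounded by constant multiples of each other on it. *)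

(* Defs.v *)
From HB Require Import structures.
From mathcomp Require Import all_boot all_order all_algebra.
From mathcomp Require Import all_classical all_reals all_analysis.
From mathcomp Require Import measurable_realfun.
Set Implicit Arguments. Unset Strict Implicit. Unset Printing Implicit Defensive.
Import Order.TTheory GRing.Theory Num.Theory.
Import numFieldNormedType.Exports.
Local Open Scope classical_set_scope.
Local Open Scope ring_scope.
Local Open Scope ereal_scope.

Section RI.
Variable R : realType.

Definition Omega : set R := `[0%R, 1%R]%classic.
Definition leb := (@lebesgue_measure R).

Definition ae_Omega (P : R -> Prop) : Prop :=
  leb.-negligible (Omega `&` [set x | ~ P x]).

Definition Mplus (X : R -> \bar R) : Prop :=
  measurable_fun Omega X /\ (forall x, 0 <= X x).

Definition indic_e (E : set R) : R -> \bar R := fun x => ((\1_E x : R)%:E).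

Definition equimeasurable (X Y : R -> \bar R) : Prop :=
  forall t : R, leb (Omega `&` [set x | t%:E < X x]) =
                leb (Omega `&` [set x | t%:E < Y x]).

Record ri_function_norm (N : (R -> \bar R) -> \bar R) : Prop := {
  rin_ge0 : forall X, Mplus X -> 0 <= N X;
  rin_eq0 : forall X, Mplus X -> (N X = 0 <-> ae_Omega (fun x => X x = 0));
  rin_homo : forall X (c : R), Mplus X -> (0 <= c)%R ->
     N (fun x => c%:E * X x) = c%:E * N X;
  rin_subadd : forall X Y, Mplus X -> Mplus Y ->
     N (fun x => X x + Y x) <= N X + N Y;
  rin_mono : forall X Y, Mplus X -> Mplus Y ->
     ae_Omega (fun x => X x <= Y x) -> N X <= N Y;
  rin_fatou : forall (Xn : nat -> R -> \bar R) X,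
     (forall n, Mplus (Xn n)) -> Mplus X ->
     ae_Omega (fun x => (forall n, Xn n x <= Xn n.+1 x) /\
                        (Xn n x @[n --> \oo] --> X x)) ->
     N (Xn n) @[n --> \oo] --> N X;
  rin_indic_fin : forall E, measurable E -> E `<=` Omega ->
     N (indic_e E) < +oo;
  rin_int : forall E, measurable E -> E `<=` Omega ->
     exists cE : R, forall X, Mplus X ->
       \int[leb]_(x in E) X x <= cE%:E * N X;
  rin_norm1 : N (indic_e Omega) = 1;
  rin_ri : forall X Y, Mplus X -> Mplus Y -> equimeasurable X Y -> N X = N Y
}.

Definition abs_e (X : R -> R) : R -> \bar R := fun x => (`|X x|)%:E.
Definition ri_norm (N : (R -> \bar R) -> \bar R) (X : R -> R) : \bar R :=
  N (abs_e X).

Definition ri_space (N : (R -> \bar R) -> \bar R) (X : R -> R) : Prop :=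
  measurable_fun Omega X /\ ri_norm N X < +oo.

(* fundamental function: t |-> N(chi_E) with mu(E) = t, E := [0,t] *)
Definition fundamental (N : (R -> \bar R) -> \bar R) (t : R) : R :=
  fine (N (indic_e `[0%R, t]%classic)).

Definition L1 (X : R -> \bar R) : \bar R := \int[leb]_(x in Omega) X x.

Definition equiv_norms (N1 N2 : (R -> \bar R) -> \bar R) : Prop :=
  (forall X, ri_space N1 X <-> ri_space N2 X) /\
  exists c C : R, (0 < c)%R /\ (0 < C)%R /\
    forall X, ri_space N1 X ->
      c%:E * ri_norm N1 X <= ri_norm N2 X /\ ri_norm N2 X <= C%:E * ri_norm N1 X.

Definition concave_on01 (f : R -> R) : Prop :=
  forall x y l : R, Omega x -> Omega y -> (0 <= l <= 1)%R ->
    (l * f x + (1 - l) * f y <= f (l * x + (1 - l) * y))%R.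

Definition good_fundamental (phi : R -> R) : Prop :=
  (forall t, Omega t -> Omega (phi t)) /\ concave_on01 phi /\
  phi 0%R = 0%R /\ phi 1%R = 1%R /\
  phi t @[t --> 0%R^'+] --> 0%R.

Definition finite_right_deriv0 (phi : R -> R) : Prop :=
  exists l : R, ((phi t - phi 0%R) / t)%R @[t --> 0%R^'+] --> l.

End RI.

(* Main.v *)
Require Import Defs.
From HB Require Import structures.
From mathcomp Require Import all_boot all_order all_algebra.
From mathcomp Require Import all_classical all_reals all_analysis.
From mathcomp Require Import measurable_realfun.
From mathcomp Require Import ring lra.
Import Order.TTheory GRing.Theory Num.Theory.
Import numFieldNormedType.Exports.
Set Implicit Arguments. Unset Strict Implicit.
Local Open Scope classical_set_scope.
Local Open Scope ring_scope.
Lemma phi_lin (R : realType) (phi : R -> R) :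
  good_fundamental phi -> finite_right_deriv0 phi ->
  exists l : R, 0 < l /\ forall t, 0 <= t <= 1 -> phi t <= l * t.
Proof.
move=> [_ [cc [p0 [p1 _]]]] [l hl].
have key : forall t, 0 < t <= 1 -> phi t / t <= l.
  move=> t /andP[t0 t1].
  apply: (cvgr_to_ge hl).
  near=> s.
  have s0 : 0 < s by near: s; exact: nbhs_right_gt.
  have st : s < t by near: s; exact: nbhs_right_lt.
  rewrite p0 subr0.
  have := cc t 0 (s / t).
  rewrite mulr0 addr0 divfK ?gt_eqF // p0 mulr0 addr0.
  have Ot : Omega t by rewrite /Omega /= in_itv /= (ltW t0) t1.
  have O0 : Omega (0:R) by rewrite /Omega /= in_itv /= lexx ler01.
  move=> /(_ Ot O0).
  rewrite divr_ge0 ?(ltW s0) ?(ltW t0) //= ler_pdivrMr // mul1r (ltW st).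
  move=> /(_ isT) h.
  rewrite ler_pdivlMr //.
  by rewrite (_ : phi t / t * s = s / t * phi t) //; ring.
have l1 : 1 <= l by have := key 1; rewrite p1 divr1 ltr01 lexx; apply.
exists l; split; first by apply: lt_le_trans l1.
move=> t /andP[t0 t1]; have [->|tn0] := eqVneq t 0; first by rewrite p0 mulr0.
have tp : 0 < t by rewrite lt_def tn0 t0.
by rewrite -ler_pdivrMr // key // tp t1.
Unshelve. all: by end_near. Qed.
Local Open Scope ereal_scope.

Lemma mplus_abs (R : realType) (X : R -> R) :
  measurable_fun (@Omega R) X -> Mplus (abs_e X).
Proof.
move=> mX; split; last by move=> x; rewrite lee_fin.
apply/measurable_EFinP; exact: measurableT_comp.
Qed.

Lemma lt_bound (R : realType) (x y : \bar R) (b : R) :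
  0 <= x -> x <= b%:E * y -> 0 <= y -> y < +oo -> x < +oo.
Proof.
move=> x0 xy y0 yoo; apply: le_lt_trans xy _.
have : y \is a fin_num by rewrite ge0_fin_numE.
by case: y {y0 yoo} => // r _; rewrite -EFinM ltry.
Qed.

Lemma equiv_of (R : realType) (N M : (R -> \bar R) -> \bar R) (a b : R) :
  (0 < a)%R -> (0 < b)%R ->
  (forall X, Mplus X -> 0 <= N X) -> (forall X, Mplus X -> 0 <= M X) ->
  (forall X, Mplus X -> N X <= a%:E * M X) ->
  (forall X, Mplus X -> M X <= b%:E * N X) -> equiv_norms N M.
Proof.
move=> a0 b0 N0 M0 NM MN; split.
  move=> X; split => -[mX fX]; split => //; rewrite /ri_norm in fX *;
  have hX := mplus_abs mX.
    exact: (lt_bound (M0 _ hX) (MN _ hX) (N0 _ hX)).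
  exact: (lt_bound (N0 _ hX) (NM _ hX) (M0 _ hX)).
exists a^-1%R, b; split; first by rewrite invr_gt0.
split => // X [mX _]; have hX := mplus_abs mX; rewrite /ri_norm; split; last exact: MN.
apply: le_trans (lee_wpmul2l _ (NM _ hX)) _; first by rewrite lee_fin invr_ge0 ltW.
by rewrite muleA -EFinM mulVf ?gt_eqF // mul1e.
Qed.


Section Main.
Variables (R : realType) (N : (R -> \bar R) -> \bar R).
Hypothesis hN : ri_function_norm N.
Local Notation Om := (@Omega R).

Lemma mO : measurable (@Omega R).
Proof. exact: measurable_itv. Qed.

Lemma ae_all (P : R -> Prop) : (forall x, Om x -> P x) -> ae_Omega P.
Proof.
move=> h; apply: (negligibleS _ (negligible_set0 _)).
by move=> x [/h].
Qed.

Lemma mplus_indic (A : set R) : measurable A -> Mplus (indic_e A).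
Proof.
move=> mA; split; last by move=> x; rewrite /indic_e lee_fin.
by apply/measurable_EFinP; exact: measurable_indic.
Qed.

Lemma indic_restrict (A : set R) : measurable A ->
  N (indic_e A) = N (indic_e (A `&` Om)).
Proof.
move=> mA; have mAO : measurable (A `&` Om) by apply: measurableI => //; exact: mO.
have e : forall x, Om x -> indic_e A x = indic_e (A `&` Om) x.
  by move=> x Ox; rewrite /indic_e !indicE in_setI (mem_set Ox) andbT.
apply/le_anti/andP; split; apply: rin_mono => //; try exact: mplus_indic;
  by apply: ae_all => x Ox; rewrite e.
Qed.

Lemma leb_Omega : leb (@Omega R) = 1.
Proof.
rewrite /leb /Omega lebesgue_measure_itv /= lte_fin ltr01.
by rewrite -EFinB subr0.
Qed.

Lemma leb_itv (m : R) : (0 <= m)%R -> leb `[0%R, m]%classic = m%:E.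
Proof.
move=> m0; rewrite /leb lebesgue_measure_itv /= lte_fin.
case: ifP => [_|/negbT]; first by rewrite oppr0 adde0.
rewrite -leNgt => m0'; suff -> : m = 0%R by [].
by apply/le_anti; rewrite m0 m0'.
Qed.

Lemma level_set (C : set R) (t : R) : C `<=` Om ->
  Om `&` [set x | t%:E < indic_e C x] =
  if (t < 0)%R then Om else if (t < 1)%R then C else set0.
Proof.
move=> CO; apply/seteqP; split => x /=; rewrite /indic_e indicE lte_fin.
  move=> [Ox]; case: (boolP (x \in C)) => xC /=.
    by case: ifP => // _ ->; rewrite inE in xC.
  by move=> ->.
case: ifP => [t0 Ox|t0]; first by split => //; apply: lt_le_trans t0 _; case: (x \in C).
case: ifP => [t1 Cx|//]; split; first exact: CO.
by rewrite mem_set.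
Qed.

Lemma leb_01 (B : set R) : measurable B -> B `<=` Om ->
  leb B = (fine (leb B))%:E /\ (0 <= fine (leb B) <= 1)%R.
Proof.
move=> mB BO.
have h1 : leb B <= 1 by rewrite -leb_Omega; apply: le_measure => //; rewrite inE //; exact: mO.
have h0 : 0 <= leb B by exact: measure_ge0.
have f : leb B \is a fin_num by rewrite ge0_fin_numE // (le_lt_trans h1) // ltry.
split; first by rewrite fineK.
by rewrite -lee_fin -(lee_fin _ 1%R) fineK // h0 h1.
Qed.

Lemma itv_sub (m : R) : (m <= 1)%R -> `[0%R, m]%classic `<=` Om.
Proof.
move=> m1 x; rewrite /Omega /= !in_itv /= => /andP[-> xm] /=.
exact: le_trans xm m1.
Qed.

Lemma equi_indic (B : set R) : measurable B -> B `<=` Om ->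
  equimeasurable (indic_e B) (indic_e `[0%R, fine (leb B)]%classic).
Proof.
move=> mB BO t; have [e /andP[m0 m1]] := leb_01 mB BO.
rewrite !level_set //; last exact: itv_sub.
by case: ifP => // _; case: ifP => // _; rewrite leb_itv.
Qed.

Lemma N_indic (B : set R) : measurable B -> B `<=` Om ->
  N (indic_e B) = (fundamental N (fine (leb B)))%:E.
Proof.
move=> mB BO; have [e /andP[m0 m1]] := leb_01 mB BO.
have mI : measurable (`[0%R, fine (leb B)]%classic : set R) by exact: measurable_itv.
rewrite (rin_ri hN (mplus_indic mB) (mplus_indic mI) (equi_indic mB BO)).
rewrite /fundamental fineK // ge0_fin_numE; last exact: rin_ge0 (mplus_indic mI).
exact: rin_indic_fin hN _ mI (itv_sub m1).
Qed.

Variable l : R.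
Hypothesis hl : forall t, (0 <= t <= 1)%R -> (fundamental N t <= l * t)%R.

Lemma N_indic_le (A : set R) : measurable A -> N (indic_e A) <= l%:E * leb (A `&` Om).
Proof.
move=> mA; have mAO : measurable (A `&` Om) by apply: measurableI => //; exact: mO.
have AO : A `&` Om `<=` Om by move=> x [].
have [e m01] := leb_01 mAO AO.
by rewrite indic_restrict // N_indic // e -EFinM lee_fin /= hl.
Qed.

Hypothesis l0 : (0 <= l)%R.

Definition Fs (s : seq R) (B : R -> set R) : R -> \bar R :=
  fun x => (\sum_(r <- s) r * \1_(B r) x)%R%:E.

Lemma N_zero : N (fun _ => 0) = 0.
Proof.
apply/(rin_eq0 hN); last by apply: ae_all.
by split => // ; exact: measurable_cst.
Qed.

Lemma sum_bound (s : seq R) (B : R -> set R) :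
  (forall r, r \in s -> 0 <= r)%R -> (forall r, measurable (B r)) ->
  Mplus (Fs s B) /\ N (Fs s B) <= l%:E * L1 (Fs s B).
Proof.
move=> s0 mB; elim: s s0 => [|r s IH] s0.
  have -> : Fs [::] B = fun _ => 0 by apply/funext => x; rewrite /Fs big_nil.
  split; first by split => //; exact: measurable_cst.
  rewrite N_zero; apply: mule_ge0; first by rewrite lee_fin.
  by apply: integral_ge0.
have r0 : (0 <= r)%R by apply: s0; rewrite inE eqxx.
have [[mF F0] NF] := IH (fun q qs => s0 q (introT orP (or_intror qs) : q \in r :: s)).
pose G := fun x => r%:E * indic_e (B r) x.
have [mI I0] := mplus_indic (mB r).
have mG : Mplus G.
  split; first exact: measurable_funeM.
  by move=> x; apply: mule_ge0 => //; rewrite lee_fin.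
have -> : Fs (r :: s) B = fun x => G x + Fs s B x.
  by apply/funext => x; rewrite /Fs big_cons EFinD EFinM.
have mGF : Mplus (fun x => G x + Fs s B x).
  split; first exact: (emeasurable_funD mG.1 mF).
  by move=> x; apply: adde_ge0 => //; exact: mG.2.
split => //.
have LG : L1 G = r%:E * leb (B r `&` Om).
  rewrite /L1 /G (@ge0_integralZl_EFin _ _ _ (@leb R) _ mO) //.
  by rewrite (@integral_indic _ _ _ (@leb R) _ mO _ (mB r)).
have LD : L1 (fun x => G x + Fs s B x) = L1 G + L1 (Fs s B).
  rewrite /L1 ge0_integralD //; [exact: mO|by move=> x _; exact: mG.2|exact: mG.1].
rewrite LD LG ge0_muleDr; last by apply: integral_ge0.
  apply: le_trans (rin_subadd hN mG (conj mF F0)) _.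
  apply: leeD => //.
  rewrite /G rin_homo //.
  rewrite muleCA; apply: lee_wpmul2l; first by rewrite lee_fin.
  exact: N_indic_le.
by apply: mule_ge0; [rewrite lee_fin|exact: measure_ge0].
Qed.

Import HBNNSimple.

Lemma nnsfun_bound (h : {nnsfun R >-> R}) :
  Mplus (fun x => (h x)%:E) /\ N (fun x => (h x)%:E) <= l%:E * L1 (fun x => (h x)%:E).
Proof.
have -> : (fun x => (h x)%:E) = Fs (finmap.enum_fset (fset_set (range h))) (fun y => h @^-1` [set y]).
  by apply/funext => x; rewrite /Fs fimfunE fsbig_finite.
apply: sum_bound.
  move=> r; rewrite in_fset_set // inE => -[x _ <-]; exact: fun_ge0.
by move=> r; apply: measurable_funPTI; exact: measurable_set1.
Qed.

Lemma upper (X : R -> \bar R) : Mplus X -> N X <= l%:E * L1 X.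
Proof.
move=> [mX X0].
have X0' : forall x, Om x -> 0 <= X x by move=> x _; exact: X0.
pose g := nnsfun_approx mO mX.
pose Xn := fun n x => ((g n x)%:E : \bar R).
have mXn : forall n, Mplus (Xn n) by move=> n; exact: (nnsfun_bound (g n)).1.
have nd : forall x m n, (m <= n)%N -> Xn m x <= Xn n x.
  by move=> x m n mn; rewrite lee_fin; move/lefP: (nd_nnsfun_approx mO mX mn); apply.
have cv : forall x, Om x -> Xn n x @[n --> \oo] --> X x.
  by move=> x Ox; exact: (cvg_nnsfun_approx mO mX X0' Ox).
have cvF := rin_fatou hN mXn (conj mX X0)
  (ae_all (fun x Ox => conj (fun n => nd x n n.+1 (leqnSn n)) (cv x Ox))).
apply: (cvge_to_le cvF); apply: nearW => n.
apply: le_trans (nnsfun_bound (g n)).2 _.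
apply: lee_wpmul2l; first by rewrite lee_fin.
apply: ge0_le_integral => //; first exact: mO.
- by move=> x _; exact: (mXn n).2.
- exact: (mXn n).1.
- move=> x Ox; apply: (cvge_to_ge (cv x Ox)).
  by exists n => // k /= nk; exact: nd.
Qed.
End Main.

Lemma eq_le_tmp (R : realType) (x y : \bar R) : x = y -> x <= y.
Proof. by move=> ->. Qed.

Lemma L1_ge0 (R : realType) (X : R -> \bar R) : Mplus X -> 0 <= L1 X.
Proof. by move=> [_ h]; apply: integral_ge0 => x _; exact: h. Qed.

Lemma chain (R : realType) (N M L : (R -> \bar R) -> \bar R) (a b : R) X :
  (0 < a)%R -> N X <= a%:E * L X -> L X <= b%:E * M X -> N X <= (a * b)%:E * M X.
Proof.
move=> a0 h1 h2; apply: le_trans h1 _.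
by rewrite EFinM -muleA lee_wpmul2l // lee_fin ltW.
Qed.

Lemma main (R : realType) (N : (R -> \bar R) -> \bar R) :
  ri_function_norm N -> good_fundamental (fundamental N) ->
  finite_right_deriv0 (fundamental N) ->
  exists a b : R, (0 < a)%R /\ (0 < b)%R /\
    forall X, Mplus X -> N X <= a%:E * L1 X /\ L1 X <= b%:E * N X.
Proof.
move=> hN hg hd.
have [l [l0 hl]] := phi_lin hg hd.
have hl' : forall t, (0 <= t <= 1)%R -> (fundamental N t <= l * t)%R by [].
have [c hc] := rin_int hN (@mO R) (@subset_refl _ (@Omega R)).
have c1 : (1 <= c)%R.
  have := hc _ (mplus_indic (@mO R)).
  rewrite (rin_norm1 hN) mule1 -lee_fin.
  rewrite (@integral_indic _ _ _ (@leb R) _ (@mO R) _ (@mO R)) setIid.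
  by move=> h; apply: le_trans h; apply: (le_trans (eq_le_tmp (esym (leb_Omega R)))).
exists l, c; split => //; split; first by apply: lt_le_trans c1.
move=> X hX; split; first exact: (upper hN hl' (ltW l0)).
exact: hc.
Qed.

Theorem theorem28 (R : realType) (N1 N2 : (R -> \bar R) -> \bar R) :
  ri_function_norm N1 -> ri_function_norm N2 ->
  good_fundamental (fundamental N1) -> good_fundamental (fundamental N2) ->
  finite_right_deriv0 (fundamental N1) -> finite_right_deriv0 (fundamental N2) ->
  equiv_norms N1 N2 /\ equiv_norms N1 (@L1 R) /\ equiv_norms N2 (@L1 R).
Proof.
move=> h1 h2 g1 g2 d1 d2.
have [a1 [b1 [a10 [b10 H1]]]] := main h1 g1 d1.
have [a2 [b2 [a20 [b20 H2]]]] := main h2 g2 d2.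
split; last split.
- apply: (@equiv_of _ _ _ (a1 * b2) (a2 * b1)); rewrite ?mulr_gt0 //.
  + by move=> X; apply: rin_ge0.
  + by move=> X; apply: rin_ge0.
  + move=> X hX; apply: (chain a10 (H1 X hX).1 (H2 X hX).2).
  + move=> X hX; apply: (chain a20 (H2 X hX).1 (H1 X hX).2).
- apply: (@equiv_of _ _ _ a1 b1) => //; [exact: rin_ge0|exact: L1_ge0|by move=> X /H1 []|by move=> X /H1 []].
- apply: (@equiv_of _ _ _ a2 b2) => //; [exact: rin_ge0|exact: L1_ge0|by move=> X /H2 []|by move=> X /H2 []].
Qed.
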